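(* Let $\Sigma^n\subset\mathbb{R}^{n+1}$ be a hyperplane through the origin and let $P\subset\Sigma$ be an $(n-1)$-dimensional linear subspace of $\Sigma$. Then each of the two open half-hyperplanes of $\Sigma\setminus P$ is stable.
   Context: Stability operator on a self-shrinker $\Sigma$: $Lf=\Delta f-\tfrac12\langle\vec x,\nabla f\rangle+(|A|^2+\tfrac12)f$. A Jacobi function is a function $u$ with $Lu=0$. A region $\Omega\subset\Sigma$ is stable if there exists a Jacobi function on $\Omega$ that is strictly positive on $\Omega$. *)

(* Defs.v *)
From Stdlib Require Import Reals Lra.
Open Scope R_scope.

(* Vectors of R^(n+1) are represented as functions nat -> R; only the
   coordinates 0..n are relevant (all notions below only look at them). *)
Definition vec := nat -> R.

Fixpoint sumR (k : nat) (f : nat -> R) : R :=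
  match k with
  | O => 0
  | S k' => sumR k' f + f k'
  end.

Definition dot (n : nat) (x y : vec) : R := sumR (S n) (fun i => x i * y i).

Definition vadd (x y : vec) : vec := fun i => x i + y i.
Definition vsub (x y : vec) : vec := fun i => x i - y i.
Definition vscale (t : R) (x : vec) : vec := fun i => t * x i.

Definition dist (n : nat) (x y : vec) : R := sqrt (dot n (vsub x y) (vsub x y)).

(* The hyperplane through the origin with normal nu: Sigma = nu^perp in R^(n+1) *)
Definition in_hyperplane (n : nat) (nu x : vec) : Prop := dot n nu x = 0.

Definition dir_deriv (f : vec -> R) (x v : vec) (l : R) : Prop :=
  derivable_pt_lim (fun t => f (vadd x (vscale t v))) 0 l.

Definition cont_on (n : nat) (Omega : vec -> Prop) (g : vec -> R) : Prop :=
  forall x, Omega x -> forall eps, 0 < eps ->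
    exists delta, 0 < delta /\
      forall y, Omega y -> dist n y x < delta -> Rabs (g y - g x) < eps.

(* e_0, ..., e_(n-1) is an orthonormal family of n vectors of Sigma
   (hence an orthonormal basis of the n-dimensional Sigma) *)
Definition orthonormal_frame (n : nat) (nu : vec) (e : nat -> vec) : Prop :=
  (forall i, (i < n)%nat -> in_hyperplane n nu (e i)) /\
  (forall i j, (i < n)%nat -> (j < n)%nat ->
     dot n (e i) (e j) = if Nat.eqb i j then 1 else 0).

(* Squared norm of the second fundamental form of the hyperplane Sigma:
   a hyperplane is totally geodesic, so |A|^2 = 0 identically. *)
Definition hyperplane_A2 (x : vec) : R := 0.

(* u is a (C^2) Jacobi function on the region Omega of Sigma:
   D1 x v is the derivative of u at x in the tangent direction v,
   D2 x v w the derivative of D1 . v in direction w (both continuous on Omega),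
   and L u = Delta u - 1/2 <x, grad u> + (|A|^2 + 1/2) u = 0 on Omega,
   where Delta u = sum_i D2 x e_i e_i for an orthonormal basis e of T Sigma
   and <x, grad u> = D1 x x (x is tangent to Sigma since Sigma is linear). *)
Definition jacobi_on (n : nat) (nu : vec) (Omega : vec -> Prop) (u : vec -> R) : Prop :=
  exists (D1 : vec -> vec -> R) (D2 : vec -> vec -> vec -> R),
    (forall x v, Omega x -> in_hyperplane n nu v -> dir_deriv u x v (D1 x v)) /\
    (forall x v w, Omega x -> in_hyperplane n nu v -> in_hyperplane n nu w ->
        dir_deriv (fun y => D1 y v) x w (D2 x v w)) /\
    (forall v, in_hyperplane n nu v -> cont_on n Omega (fun y => D1 y v)) /\
    (forall v w, in_hyperplane n nu v -> in_hyperplane n nu w ->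
        cont_on n Omega (fun y => D2 y v w)) /\
    (forall x, Omega x -> forall e, orthonormal_frame n nu e ->
        sumR n (fun i => D2 x (e i) (e i)) - / 2 * D1 x x
          + (hyperplane_A2 x + / 2) * u x = 0).

Definition stable (n : nat) (nu : vec) (Omega : vec -> Prop) : Prop :=
  exists u : vec -> R, jacobi_on n nu Omega u /\ (forall x, Omega x -> 0 < u x).

(* Main.v *)
Require Import Defs.
From Stdlib Require Import Reals Lra.
Open Scope R_scope.

Lemma sumR_lin (k : nat) (a : R) (f g : nat -> R) :
  sumR k (fun i => f i + a * g i) = sumR k f + a * sumR k g.
Proof. induction k; simpl; [ring | rewrite IHk; ring]. Qed.

Lemma sumR_zero (k : nat) : sumR k (fun _ => 0) = 0.
Proof. induction k; simpl; [ring | rewrite IHk; ring]. Qed.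


Lemma sumR_ext k (f g : nat -> R) : (forall i, f i = g i) -> sumR k f = sumR k g.
Proof. intros H; induction k; simpl; [ring | rewrite IHk, H; ring]. Qed.

Lemma dot_lin n (eta x v : vec) t :
  dot n eta (vadd x (vscale t v)) = dot n eta x + t * dot n eta v.
Proof.
  unfold dot, vadd, vscale.
  rewrite <- sumR_lin. apply sumR_ext. intros; ring.
Qed.

Lemma stable_lin n nu eta (s : R) (Omega : vec -> Prop) :
  (forall x, Omega x -> 0 < s * dot n eta x) ->
  stable n nu Omega.
Proof.
  intros Hpos.
  exists (fun x => s * dot n eta x). split; [|exact Hpos].
  exists (fun _ v => s * dot n eta v), (fun _ _ _ => 0).
  split; [|split; [|split; [|split]]].
  - intros x v _ _. unfold dir_deriv.
    apply derivable_pt_lim_ext with (f := fun t => s * dot n eta x + (s * dot n eta v) * t).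
    + intros t. rewrite dot_lin. ring.
    + assert (H := derivable_pt_lim_plus (fun _ => s * dot n eta x)
          (fun t => s * dot n eta v * t) 0 0 (s * dot n eta v * 1)
          (derivable_pt_lim_const _ 0)
          (derivable_pt_lim_scal id (s * dot n eta v) 0 1 (derivable_pt_lim_id 0))).
      replace (0 + s * dot n eta v * 1) with (s * dot n eta v) in H by ring.
      exact H.
  - intros x v w _ _ _. unfold dir_deriv. apply derivable_pt_lim_const.
  - intros v _ x _ eps Heps. exists 1. split; [lra|]. intros.
    rewrite Rminus_diag, Rabs_R0. exact Heps.
  - intros v w _ _ x _ eps Heps. exists 1. split; [lra|]. intros.
    rewrite Rminus_diag, Rabs_R0. exact Heps.
  - intros x _ e _. rewrite sumR_zero. unfold hyperplane_A2. ring.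
Qed.

Theorem proposition4p1 (n : nat) (hn : (1 <= n)%nat) (nu eta : vec)
    (hnu : 0 < dot n nu nu) (heta_in : in_hyperplane n nu eta)
    (heta : 0 < dot n eta eta) :
  stable n nu (fun x => in_hyperplane n nu x /\ 0 < dot n eta x) /\
  stable n nu (fun x => in_hyperplane n nu x /\ dot n eta x < 0).
Proof.
  split.
  - apply (stable_lin n nu eta 1). intros x [_ H]. lra.
  - apply (stable_lin n nu eta (-1)). intros x [_ H]. lra.
Qed.
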